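(* Let $T_1^*\in[0,1]$ and $T_2^*=(T_1^* )^3$, and let $\tilde W^*=\{\tilde h\in\tilde W: t(K_2,\tilde h)=T_1^*,\ t(K_3,\tilde h)=T_2^*\}$. Then $$\inf_{\tilde h\in\tilde W^*}I(\tilde h)=I\big((T_2^* )^{1/3}\big)=I(T_1^* ).$$
   Context: $W$ is the set of measurable symmetric $h:[0,1]^2\to[0,1]$, $\tilde W$ its quotient under relabelling by measure-preserving bijections of $[0,1]$. $t(K_2,h)=\int h(x,y)\,dx\,dy$ and $t(K_3,h)=\int h(x_1,x_2)h(x_2,x_3)h(x_3,x_1)\,dx_1dx_2dx_3$. $I(u)=\tfrac12u\log u+\tfrac12(1-u)\log(1-u)$ with $0\log0=0$, and $I(h)=\int_{[0,1]^2}I(h(x,y))\,dx\,dy$ (well defined on $\tilde W$). *)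

(* Defs.v *)
From HB Require Import structures.
From mathcomp Require Import all_boot all_order all_algebra.
From mathcomp Require Import all_classical all_reals all_analysis.
Unset Printing Implicit Defensive.
Import Order.TTheory GRing.Theory Num.Theory.
Local Open Scope classical_set_scope.
Local Open Scope ring_scope.

Definition leb (R : realType) := @lebesgue_measure R.
Definition leb2 (R : realType) := (leb R \x leb R)%E.
Definition leb3 (R : realType) := (leb2 R \x leb R)%E.

Definition I01 (R : realType) : set R := `[0%R, 1%R].
Definition sq01 (R : realType) : set (R * R) := I01 R `*` I01 R.
Definition cube01 (R : realType) : set ((R * R) * R) :=
  (I01 R `*` I01 R) `*` I01 R.

(* graphons: measurable symmetric h : [0,1]^2 -> [0,1]
   (represented as functions on R*R, only values on [0,1]^2 matter) *)
Definition graphon {R : realType} (h : R * R -> R) : Prop :=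
  measurable_fun (sq01 R) h /\
  (forall x y, x \in I01 R -> y \in I01 R -> h (x, y) = h (y, x)) /\
  (forall x y, x \in I01 R -> y \in I01 R -> 0 <= h (x, y) <= 1).

Definition tK2 {R : realType} (h : R * R -> R) : R :=
  Rintegral (leb2 R) (sq01 R) h.

Definition tK3 {R : realType} (h : R * R -> R) : R :=
  Rintegral (leb3 R) (cube01 R)
    (fun z => h (z.1.1, z.1.2) * h (z.1.2, z.2) * h (z.2, z.1.1)).

Definition xlogx {R : realType} (u : R) : R := if u == 0 then 0 else u * ln u.

Definition Ient {R : realType} (u : R) : R :=
  2^-1 * xlogx u + 2^-1 * xlogx (1 - u).

Definition Igraphon {R : realType} (h : R * R -> R) : R :=
  Rintegral (leb2 R) (sq01 R) (fun z => Ient (h z)).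

(* Main.v *)
Require Import Defs.
From HB Require Import structures.
From mathcomp Require Import all_boot all_order all_algebra.
From mathcomp Require Import all_classical all_reals all_analysis.
From mathcomp Require Import ring lra measurable_realfun.
Import Order.TTheory GRing.Theory Num.Theory.
Local Open Scope classical_set_scope.
Local Open Scope ring_scope.

Section S.
Variable R : realType.


Lemma mI01 : measurable (I01 R).
Proof. exact: measurable_itv. Qed.
Lemma msq01 : measurable (sq01 R).
Proof. exact: measurableX mI01 mI01. Qed.
Lemma mcube01 : measurable (cube01 R).
Proof. exact: measurableX msq01 mI01. Qed.
Lemma lebI01 : leb R (I01 R) = 1%E.
Proof. by rewrite /leb /I01 lebesgue_measure_itv /= lte_fin ltr01 oppr0 adde0. Qed.
Lemma leb2sq : leb2 R (sq01 R) = 1%E.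
Proof. rewrite /leb2 /sq01 product_measure1E; [|exact: mI01|exact: mI01]; by change (leb R (I01 R) * leb R (I01 R) = 1)%E; rewrite lebI01 mule1. Qed.
Lemma leb3cube : leb3 R (cube01 R) = 1%E.
Proof. rewrite /leb3 /cube01 product_measure1E; [|exact: msq01|exact: mI01]; by change (leb2 R (sq01 R) * leb R (I01 R) = 1)%E; rewrite lebI01 leb2sq mule1. Qed.

Lemma xlogxE (u : R) : xlogx u = u * ln u.
Proof. by rewrite /xlogx; case: eqP => [->|]; rewrite ?mul0r. Qed.

Lemma key (a u : R) : 0 < a -> 0 <= u -> u - a <= xlogx u - u * ln a.
Proof.
move=> a0; rewrite le_eqVlt => /predU1P[<-|u0].
  by rewrite xlogxE !mul0r subrr sub0r lerNl oppr0 ltW.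
rewrite xlogxE -mulrBr.
have h : ln (a / u) <= a / u - 1.
  have := @le_ln1Dx R (a / u - 1); rewrite (_ : 1 + (a / u - 1) = a / u); last by rewrite addrC subrK.
  apply.
  have : 0 < a / u by rewrite divr_gt0. lra.
have e : ln (a / u) = ln a - ln u by rewrite ln_div // posrE.
rewrite e in h.
have := ler_wpM2l (ltW u0) h.
have e2 : u * (a / u) = a by rewrite mulrC -mulrA mulVf ?gt_eqF // mulr1.
rewrite !mulrBr e2 mulr1 => H.
lra.
Qed.

Lemma Ient_lb (a u : R) : 0 < a < 1 -> 0 <= u <= 1 ->
  2^-1 * (u * ln a) + 2^-1 * ((1 - u) * ln (1 - a)) <= Ient u.
Proof.
move=> /andP[a0 a1] /andP[u0 u1].
have k1 := @key a u a0 u0.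
have k2 := @key (1 - a) (1 - u) ltac:(by rewrite subr_gt0) ltac:(by rewrite subr_ge0).
rewrite /Ient.
have h2 : (0 : R) < 2^-1 by rewrite invr_gt0 ltr0n.
set A := xlogx u in k1 *; set B := xlogx (1 - u) in k2 *.
set la := ln a in k1 *; set lb := ln (1 - a) in k2 *.
rewrite -!mulrDr ler_pM2l //.
lra.
Qed.

Lemma bnd d (T : measurableType d) (D : set T) (f : T -> R) M :
  (forall x, D x -> `|f x| <= M) -> [bounded f x | x in D].
Proof.
move=> H; rewrite /bounded_near; near=> y => x Dx /=; apply: le_trans (H x Dx) _.
near: y; apply: nbhs_pinfty_ge; exact: num_real.
Unshelve. all: by end_near.
Qed.

Lemma measurable_Ient : measurable_fun setT (@Ient R).
Proof.
have -> : @Ient R = (fun u => 2^-1 * (u * ln u) + 2^-1 * ((1 - u) * ln (1 - u))).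
  by apply: funext => u; rewrite /Ient !xlogxE.
apply: measurable_funD; apply: measurable_funM => //.
- apply: measurable_funM => //; exact: measurable_ln.
- apply: measurable_funM => //; first exact: measurable_funB.
  apply: measurableT_comp; first exact: measurable_ln.
  exact: measurable_funB.
Qed.

Lemma Ient_le0 (u : R) : 0 <= u <= 1 -> Ient u <= 0.
Proof.
move=> /andP[u0 u1]; rewrite /Ient !xlogxE.
have h1 : u * ln u <= 0 by rewrite mulr_ge0_le0 // ln_le0.
have h2 : (1 - u) * ln (1 - u) <= 0 by rewrite mulr_ge0_le0 ?subr_ge0 // ln_le0 // gerBl.
have h : (0 : R) < 2^-1 by rewrite invr_gt0 ltr0n.
nra.
Qed.

Lemma Ient_bnd (u : R) : 0 <= u <= 1 -> `|Ient u| <= - (2^-1 * ln (2^-1)).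
Proof.
move=> hu.
have := @Ient_lb (2^-1) u ltac:(rewrite invr_gt0 ltr0n /= invf_lt1 ?ltr0n // ltr1n //) hu.
have e : (1 : R) - 2^-1 = 2^-1 by field.
rewrite e => H.
have H2 := @Ient_le0 u hu.
rewrite ler0_norm //.
set L := ln (2^-1 : R) in H *.
have : 2^-1 * (u * L) + 2^-1 * ((1 - u) * L) = 2^-1 * L by ring.
lra.
Qed.

Lemma int_sq (f : R * R -> R) M : measurable_fun (sq01 R) f ->
  (forall z, sq01 R z -> `|f z| <= M) -> (leb2 R).-integrable (sq01 R) (EFin \o f).
Proof.
move=> mf fb; apply: measurable_bounded_integrable => //.
- exact: msq01.
- apply: (@le_lt_trans _ _ 1%E); last exact: ltry.
  by rewrite le_eqVlt; apply/orP; left; apply/eqP; exact: leb2sq.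
- exact: bnd fb.
Qed.

Lemma hbnd (h : R * R -> R) : graphon h -> forall z, sq01 R z -> 0 <= h z <= 1.
Proof.
move=> [_ [_ hb]] [x y] [/= hx hy]; apply: hb; exact: mem_set.
Qed.

Lemma main_lb (h : R * R -> R) (a : R) : graphon h -> 0 < a < 1 ->
  2^-1 * (tK2 h * ln a) + 2^-1 * ((1 - tK2 h) * ln (1 - a)) <= Igraphon h.
Proof.
move=> gh ha.
have hb := @hbnd h gh.
have mh : measurable_fun (sq01 R) h by case: gh.
set c1 := 2^-1 * ln a - 2^-1 * ln (1 - a).
set c0 := 2^-1 * ln (1 - a).
have ih : (leb2 R).-integrable (sq01 R) (EFin \o h).
  apply: (@int_sq _ (1)) => // z /hb /andP[h0 h1]; by rewrite ger0_norm.
have ih1 : (leb2 R).-integrable (sq01 R) (EFin \o (fun z => c1 * h z)).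
  apply: (@int_sq _ (`|c1|)).
    by apply: measurable_funM => //; exact: measurable_cst.
  move=> z /hb /andP[h0 h1]; rewrite normrM (ger0_norm h0).
  by rewrite -[X in _ <= X]mulr1 ler_wpM2l.
have ic : (leb2 R).-integrable (sq01 R) (EFin \o (fun _ => c0)).
  by apply: (@int_sq _ (`|c0|)) => //; exact: measurable_cst.
have iI : (leb2 R).-integrable (sq01 R) (EFin \o (fun z => Ient (h z))).
  apply: (@int_sq _ (- (2^-1 * ln (2^-1)))).
    exact: (measurableT_comp measurable_Ient mh).
  by move=> z /hb; exact: Ient_bnd.
have E : Rintegral (leb2 R) (sq01 R) (fun z => c1 * h z + c0) =
         2^-1 * (tK2 h * ln a) + 2^-1 * ((1 - tK2 h) * ln (1 - a)).
  rewrite RintegralD //; [|exact: msq01].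
  rewrite RintegralZl //; [|exact: msq01].
  rewrite Rintegral_cst; [|exact: msq01].
  have F : fine (leb2 R (sq01 R)) = 1 by rewrite leb2sq.
  rewrite F /tK2 /c1 /c0; ring.
rewrite -E /Igraphon; apply: le_Rintegral => //.
- exact: msq01.
- apply: (@int_sq _ (`|c1| + `|c0|)).
    apply: measurable_funD; last exact: measurable_cst.
    by apply: measurable_funM => //; exact: measurable_cst.
  move=> z /hb /andP[h0 h1]; apply: (le_trans (ler_normD _ _)).
  rewrite lerD2r normrM (ger0_norm h0).
  by rewrite -[X in _ <= X]mulr1 ler_wpM2l.
- move=> z /hb hz.
  have := @Ient_lb a (h z) ha hz.
  by rewrite /c1 /c0 (_ : 2^-1 * (h z * ln a) + 2^-1 * ((1 - h z) * ln (1 - a)) = (2^-1 * ln a - 2^-1 * ln (1 - a)) * h z + 2^-1 * ln (1 - a)) //; ring.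
Qed.

Lemma Ient0 : Ient (0 : R) = 0.
Proof. by rewrite /Ient !xlogxE subr0 ln1; ring. Qed.
Lemma Ient1 : Ient (1 : R) = 0.
Proof. by rewrite /Ient !xlogxE subrr ln1; ring. Qed.

Lemma I_lb (h : R * R -> R) (T1 : R) : graphon h -> tK2 h = T1 -> 0 <= T1 <= 1 ->
  Ient T1 <= Igraphon h.
Proof.
move=> gh e /andP[t0 t1].
have [T0|tn0] := eqVneq T1 0.
  rewrite T0 in e *; rewrite Ient0; rewrite leNgt; apply/negP => x0.
  set x := Igraphon h in x0.
  have H := @main_lb h (1 - expR x) gh.
  rewrite e subKr expRK mul0r mulr0 add0r subr0 mul1r in H.
  have : x * 2^-1 <= x.
    rewrite mulrC; apply: H.
    by rewrite subr_gt0 expR_lt1 x0 /= gtrDl oppr_lt0 expR_gt0.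
  lra.
have [T0|tn1] := eqVneq T1 1.
  rewrite T0 in e *; rewrite Ient1; rewrite leNgt; apply/negP => x0.
  set x := Igraphon h in x0.
  have H := @main_lb h (expR x) gh.
  rewrite e subrr expRK mul1r mul0r mulr0 addr0 in H.
  have : x * 2^-1 <= x.
    rewrite mulrC; apply: H.
    by rewrite expR_gt0 expR_lt1 x0.
  lra.
have H := @main_lb h T1 gh.
rewrite e in H.
rewrite /Ient !xlogxE; apply: H.
by rewrite !lt_neqAle eq_sym tn0 tn1 t0 t1.
Qed.

Lemma cst_graphon (T1 : R) : 0 <= T1 <= 1 -> graphon (fun _ : R * R => T1).
Proof.
move=> hT; split; first exact: measurable_cst.
by split.
Qed.

Lemma cst_tK2 (T1 : R) : tK2 (fun _ : R * R => T1) = T1.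
Proof.
rewrite /tK2 Rintegral_cst; last exact: msq01.
have F : fine (leb2 R (sq01 R)) = 1 by rewrite leb2sq.
by rewrite F mulr1.
Qed.

Lemma cst_tK3 (T1 : R) : tK3 (fun _ : R * R => T1) = T1 ^+ 3.
Proof.
rewrite /tK3 Rintegral_cst; last exact: mcube01.
have F : fine (leb3 R (cube01 R)) = 1 by rewrite leb3cube.
by rewrite F mulr1 !exprS expr0 mulr1 mulrA.
Qed.

Lemma cst_I (T1 : R) : Igraphon (fun _ : R * R => T1) = Ient T1.
Proof.
rewrite /Igraphon Rintegral_cst; last exact: msq01.
have F : fine (leb2 R (sq01 R)) = 1 by rewrite leb2sq.
by rewrite F mulr1.
Qed.
End S.

Theorem mainTheorem7 (R : realType) (T1 T2 : R) :
  0 <= T1 <= 1 -> T2 = T1 ^+ 3 ->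
  inf [set Igraphon h | h in
        [set h : R * R -> R | graphon h /\ tK2 h = T1 /\ tK3 h = T2]]
  = Ient (T2 `^ (3%:R^-1)) /\
  Ient (T2 `^ (3%:R^-1)) = Ient T1.
Proof.
move=> hT eT2.
have e3 : T2 `^ (3%:R^-1) = T1.
  have t0 : 0 <= T1 by case/andP: hT.
  rewrite eT2 -powR_mulrn // -powRrM mulfV ?pnatr_eq0 // powRr1 //.
rewrite e3; split => //.
set E := [set Igraphon h | h in _].
have mem : E (Ient T1).
  exists (fun _ => T1); last exact: cst_I.
  split; first exact: cst_graphon.
  by rewrite cst_tK2 cst_tK3 eT2.
have lb : lbound E (Ient T1).
  by move=> y [h [gh [e2 _]] <-]; exact: I_lb gh e2 hT.
apply/le_anti/andP; split.
- apply: (ge_inf _ mem); by exists (Ient T1).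
- by apply: lb_le_inf => //; exists (Ient T1).
Qed.
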